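(* Let $(x_i)_{i\in\mathbb Z}$ be real numbers and $(a_{ij})_{i,j\in\mathbb Z}$ real weights with $a_{ij}\neq0$ for all $i,j$. Assume that for every $i$ the series $\sum_{j=1}^\infty a_{i,i+j}x_{i+j}$ and $\sum_{j=1}^\infty a_{i,i-j}x_{i-j}$ converge, and that there is a constant $K\neq0$, independent of $i$, with $K=a_{ii}+\sum_{j=1}^\infty(a_{i,i-j}+a_{i,i+j})$ for every $i$ (the series converging). Define, for all $i$, $y^F_i(0)=y^B_i(0)=\frac1K a_{ii}x_i$; $y^F_i(1)=y^F_i(0)+\frac{a_{i,i+1}}{a_{i+1,i+1}}y^F_{i+1}(0)$, $\;y^B_i(1)=y^B_i(0)+\frac{a_{i,i-1}}{a_{i-1,i-1}}y^B_{i-1}(0)$; and for $k\ge1$, $y^F_i(k+1)=y^F_i(k)+\frac{a_{i,i+k+1}}{a_{i+1,i+k+1}}\big(y^F_{i+1}(k)-y^F_{i+1}(k-1)\big)$, $y^B_i(k+1)=y^B_i(k)+\frac{a_{i,i-k-1}}{a_{i-1,i-k-1}}\big(y^B_{i-1}(k)-y^B_{i-1}(k-1)\big)$. Set $y_i(k)=y^F_i(k)+y^B_i(k)-\frac1K a_{ii}x_i$ for $k\ge0$. Then for every $i$, $$\lim_{k\to\infty}y_i(k)=\frac1K\Big(a_{ii}x_i+\sum_{j=1}^\infty(a_{i,i-j}x_{i-j}+a_{i,i+j}x_{i+j})\Big).$$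
   Context: Sensors indexed by $i\in\mathbb Z$ on a line, each with time-invariant measurement $x_i$; sensor $i$ maintains forward and backward consensus variables $y^F_i(k),y^B_i(k)$ and may communicate only with sensors $i\pm1$. *)

(* Defs.v *)
From Stdlib Require Import Reals ZArith.
Open Scope R_scope.

Definition series1_cv (f : nat -> R) (l : R) : Prop :=
  Un_cv (fun n => sum_f_R0 (fun j => f (S j)) n) l.

Section Consensus.
Variables (a : Z -> Z -> R) (x : Z -> R) (K : R).

Fixpoint yF (k : nat) (i : Z) {struct k} : R :=
  match k with
  | O => / K * a i i * x i
  | S O => / K * a i i * x i + a i (i + 1)%Z / a (i + 1)%Z (i + 1)%Z * (/ K * a (i+1)%Z (i+1)%Z * x (i+1)%Z)
  | S ((S k') as k1) =>
      (* step k -> k+1 with k = k1 = k'+1 >= 1 *)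
      yF k1 i + a i (i + Z.of_nat k1 + 1)%Z / a (i + 1)%Z (i + Z.of_nat k1 + 1)%Z
                 * (yF k1 (i + 1)%Z - yF k' (i + 1)%Z)
  end.

Fixpoint yB (k : nat) (i : Z) {struct k} : R :=
  match k with
  | O => / K * a i i * x i
  | S O => / K * a i i * x i + a i (i - 1)%Z / a (i - 1)%Z (i - 1)%Z * (/ K * a (i-1)%Z (i-1)%Z * x (i-1)%Z)
  | S ((S k') as k1) =>
      yB k1 i + a i (i - Z.of_nat k1 - 1)%Z / a (i - 1)%Z (i - Z.of_nat k1 - 1)%Z
                 * (yB k1 (i - 1)%Z - yB k' (i - 1)%Z)
  end.

Definition y (k : nat) (i : Z) : R := yF k i + yB k i - / K * a i i * x i.
End Consensus.

(* Main.v *)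
Require Import Defs.
From Stdlib Require Import Reals ZArith Lra Lia.
Open Scope R_scope.

Lemma yF_diff (x : Z -> R) (a : Z -> Z -> R) (K : R)
  (ha : forall i j : Z, a i j <> 0) (hK : K <> 0) : forall k i,
  yF a x K (S k) i - yF a x K k i = / K * a i (i + Z.of_nat (S k))%Z * x (i + Z.of_nat (S k))%Z.
Proof.
  induction k as [|k IH]; intro i.
  - simpl. replace (i + 1)%Z with (i + Z.of_nat 1)%Z by reflexivity.
    field. repeat split; auto.
  - change (yF a x K (S (S k)) i) with
      (yF a x K (S k) i + a i (i + Z.of_nat (S k) + 1)%Z / a (i + 1)%Z (i + Z.of_nat (S k) + 1)%Z
                 * (yF a x K (S k) (i + 1)%Z - yF a x K k (i + 1)%Z)).
    rewrite IH.
    replace (i + 1 + Z.of_nat (S k))%Z with (i + Z.of_nat (S (S k)))%Z by lia.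
    replace (i + Z.of_nat (S k) + 1)%Z with (i + Z.of_nat (S (S k)))%Z by lia.
    field. repeat split; auto.
Qed.

Lemma yB_diff (x : Z -> R) (a : Z -> Z -> R) (K : R)
  (ha : forall i j : Z, a i j <> 0) (hK : K <> 0) : forall k i,
  yB a x K (S k) i - yB a x K k i = / K * a i (i - Z.of_nat (S k))%Z * x (i - Z.of_nat (S k))%Z.
Proof.
  induction k as [|k IH]; intro i.
  - simpl. replace (i - 1)%Z with (i - Z.of_nat 1)%Z by reflexivity.
    field. repeat split; auto.
  - change (yB a x K (S (S k)) i) with
      (yB a x K (S k) i + a i (i - Z.of_nat (S k) - 1)%Z / a (i - 1)%Z (i - Z.of_nat (S k) - 1)%Z
                 * (yB a x K (S k) (i - 1)%Z - yB a x K k (i - 1)%Z)).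
    rewrite IH.
    replace (i - 1 - Z.of_nat (S k))%Z with (i - Z.of_nat (S (S k)))%Z by lia.
    replace (i - Z.of_nat (S k) - 1)%Z with (i - Z.of_nat (S (S k)))%Z by lia.
    field. repeat split; auto.
Qed.

Lemma y_closed (x : Z -> R) (a : Z -> Z -> R) (K : R)
  (ha : forall i j : Z, a i j <> 0) (hK : K <> 0) : forall n i,
  y a x K (S n) i = / K * (a i i * x i + sum_f_R0 (fun j =>
     a i (i - Z.of_nat (S j))%Z * x (i - Z.of_nat (S j))%Z
     + a i (i + Z.of_nat (S j))%Z * x (i + Z.of_nat (S j))%Z) n).
Proof.
  intros n i. unfold y.
  induction n as [|n IH].
  - simpl sum_f_R0.
    pose proof (yF_diff x a K ha hK 0 i). pose proof (yB_diff x a K ha hK 0 i).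
    simpl yF in *; simpl yB in *. simpl Z.of_nat in *.
    field. repeat split; auto.
  - rewrite tech5. cbv beta.
    pose proof (yF_diff x a K ha hK (S n) i). pose proof (yB_diff x a K ha hK (S n) i).
    lra.
Qed.

Theorem theorem3 (x : Z -> R) (a : Z -> Z -> R) (K : R)
  (ha : forall i j : Z, a i j <> 0)
  (hK : K <> 0)
  (hF : forall i : Z, exists l, series1_cv (fun j => a i (i + Z.of_nat j)%Z * x (i + Z.of_nat j)%Z) l)
  (hB : forall i : Z, exists l, series1_cv (fun j => a i (i - Z.of_nat j)%Z * x (i - Z.of_nat j)%Z) l)
  (hKsum : forall i : Z,
     series1_cv (fun j => a i (i - Z.of_nat j)%Z + a i (i + Z.of_nat j)%Z) (K - a i i)) :
  forall i : Z, exists S : R,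
    series1_cv (fun j => a i (i - Z.of_nat j)%Z * x (i - Z.of_nat j)%Z
                         + a i (i + Z.of_nat j)%Z * x (i + Z.of_nat j)%Z) S /\
    Un_cv (fun k => y a x K k i) (/ K * (a i i * x i + S)).
Proof.
  intro i. destruct (hF i) as [lF HF]. destruct (hB i) as [lB HB].
  exists (lB + lF).
  assert (HS : series1_cv (fun j => a i (i - Z.of_nat j)%Z * x (i - Z.of_nat j)%Z
                         + a i (i + Z.of_nat j)%Z * x (i + Z.of_nat j)%Z) (lB + lF)).
  { unfold series1_cv in *.
    eapply Un_cv_ext. 2: apply (CV_plus _ _ _ _ HB HF).
    intro n. simpl. rewrite <- sum_plus. reflexivity. }
  split; [exact HS|].
  intros eps Heps.
  unfold series1_cv in HS.
  assert (Hc : Un_cv (fun n => / K * (a i i * x i + sum_f_R0 (fun j =>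
     a i (i - Z.of_nat (S j))%Z * x (i - Z.of_nat (S j))%Z
     + a i (i + Z.of_nat (S j))%Z * x (i + Z.of_nat (S j))%Z) n)) (/ K * (a i i * x i + (lB + lF)))).
  { apply CV_mult. intros e He. exists 0%nat. intros. unfold Rdist. rewrite Rminus_diag, Rabs_R0. lra.
    apply CV_plus. intros e He. exists 0%nat. intros. unfold Rdist. rewrite Rminus_diag, Rabs_R0. lra.
    exact HS. }
  destruct (Hc eps Heps) as [N HN].
  exists (S N). intros n Hn.
  destruct n as [|m]; [lia|].
  rewrite y_closed by assumption.
  apply HN. lia.
Qed.
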